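(* Let $n$ be a non-negative integer. Then \[ \sum_{k=0}^{\lfloor n/2\rfloor}\binom{n}{2k}2^{n-2k}\binom{2k}{k}H_{2k}^{(2)}=\binom{2n}{n}H_n^{(2)}-\sum_{k=0}^{n-1}\binom{2k}{k}2^{n-k}\frac{H_n-H_k}{n-k}, \] \[ \sum_{k=0}^{n}(-1)^k\binom{n}{k}2^{-k}\binom{2k}{k}H_k^{(2)}=-\sum_{k=0}^{\lfloor n/2\rfloor-1}\binom{2k}{k}2^{-2k}\frac{H_n-H_{2k}}{n-2k}+\begin{cases}2^{-n}\binom{n}{n/2}H_n^{(2)},&n\text{ even},\\[2pt]-2^{-n+1}\binom{n-1}{(n-1)/2}\dfrac1n,&n\text{ odd},\end{cases} \] and, more generally, for every real number $v$, \[ \sum_{k=0}^{\lfloor n/2\rfloor}\binom{n}{2k}2^{n-2k}\binom{2k}{k}\binom{(2k+v)/2}{v/2}^{-1}H_{2k}^{(2)}=\binom{2n+v}{(2n+v)/2}\binom{n+v}{v/2}^{-1}H_n^{(2)}-\sum_{k=0}^{n-1}\binom{2k+v}{(2k+v)/2}2^{n-k}\binom{k+v}{v/2}^{-1}\frac{H_n-H_k}{n-k}, \] \[ \begin{aligned} \sum_{k=0}^{n}(-1)^k\binom{n}{k}2^{-k}\binom{2k+v}{(2k+v)/2}\binom{k+v}{v/2}^{-1}H_k^{(2)} &=-\sum_{k=0}^{\lfloor n/2\rfloor-1}\binom{2k}{k}2^{-2k}\binom{(2k+v)/2}{v/2}^{-1}\frac{H_n-H_{2k}}{n-2k}\\ &\quad+\begin{cases}\binom{n}{n/2}2^{-n}\binom{(n+v)/2}{v/2}^{-1}H_n^{(2)},&n\text{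 even},\\[2pt]-\binom{n-1}{(n-1)/2}2^{-n+1}\binom{(n-1+v)/2}{v/2}^{-1}\dfrac1n,&n\text{ odd}.\end{cases} \end{aligned} \]
   Context: For integers $m\ge0$, $H_m=\sum_{j=1}^m 1/j$ and $H_m^{(2)}=\sum_{j=1}^m 1/j^2$. Binomial coefficients with real or complex entries: $\binom{x}{y}=\frac{\Gamma(x+1)}{\Gamma(y+1)\Gamma(x-y+1)}$. Empty sums are zero. *)

(* Defs.v *)
From Stdlib Require Import Reals Factorial Rprod Binomial.
From Coquelicot Require Import Coquelicot.
Open Scope R_scope.

(* Euler's Gamma function via the Gauss product formula
   Gamma(x) = lim_{n->oo} n! n^x / (x (x+1) ... (x+n)),
   valid for every real x that is not a non-positive integer. *)
Definition Gamma (x : R) : R :=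
  real (Lim_seq (fun n : nat =>
    INR (fact n) * Rpower (INR n) x / prod_f_R0 (fun j => x + INR j) n)).

Definition binomR (x y : R) : R :=
  Gamma (x + 1) / (Gamma (y + 1) * Gamma (x - y + 1)).

Fixpoint H (m : nat) : R :=
  match m with O => 0 | S p => H p + / INR (S p) end.
Fixpoint H2 (m : nat) : R :=
  match m with O => 0 | S p => H2 p + / (INR (S p) ^ 2) end.

Fixpoint sumR (f : nat -> R) (m : nat) : R :=
  match m with O => 0 | S p => sumR f p + f p end.

(* Ordinary binomial coefficient n choose k for natural entries, as a real
   (Stdlib's Binomial.C = n! / (k! (n-k)!); Coquelicot's C is the complexes). *)
Definition binomN (n k : nat) : R := Binomial.C n k.

(* Main.v *)
Require Import Defs.
From Stdlib Require Import Reals Arith Factorial Binomial Lra Lia.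
From Coquelicot Require Import Coquelicot.
Open Scope R_scope.


Lemma sumR_S f m : sumR f (S m) = sumR f m + f m. Proof. reflexivity. Qed.

Lemma sumR_ext f g m : (forall i, (i < m)%nat -> f i = g i) -> sumR f m = sumR g m.
Proof. induction m; intros Hf; simpl; auto. rewrite IHm by (intros; apply Hf; lia). rewrite Hf by lia; auto. Qed.

Lemma sumR_plus f g m : sumR (fun i => f i + g i) m = sumR f m + sumR g m.
Proof. induction m; simpl; [lra|]. rewrite IHm; lra. Qed.

Lemma sumR_minus f g m : sumR (fun i => f i - g i) m = sumR f m - sumR g m.
Proof. induction m; simpl; [lra|]. rewrite IHm; lra. Qed.

Lemma sumR_scal c f m : sumR (fun i => c * f i) m = c * sumR f m.
Proof. induction m; simpl; [lra|]. rewrite IHm; lra. Qed.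

Lemma sumR_zero f m : (forall i, (i < m)%nat -> f i = 0) -> sumR f m = 0.
Proof. induction m; intros Hf; simpl; auto. rewrite IHm by (intros; apply Hf; lia). rewrite Hf by lia; lra. Qed.

Lemma sumR_shift f m : sumR f (S m) = f 0%nat + sumR (fun i => f (S i)) m.
Proof. induction m; simpl; [lra|]. simpl in IHm. rewrite IHm. lra. Qed.

Lemma sumR_tail f p m : (p <= m)%nat -> (forall i, (p <= i)%nat -> (i < m)%nat -> f i = 0) ->
  sumR f m = sumR f p.
Proof. induction m; intros Hp Hf.
- replace p with 0%nat by lia. auto.
- destruct (Nat.eq_dec p (S m)) as [->|Hne]; auto.
  simpl. rewrite IHm by (try lia; intros; apply Hf; lia). rewrite Hf by lia. lra. Qed.

Lemma sumR_swap (f : nat -> nat -> R) p q :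
  sumR (fun i => sumR (fun j => f i j) q) p = sumR (fun j => sumR (fun i => f i j) p) q.
Proof. induction p; simpl.
- symmetry; apply sumR_zero; auto.
- rewrite IHp. rewrite <- sumR_plus. auto. Qed.

Lemma sumR_double g m : sumR g (2 * m) = sumR (fun k => g (2 * k)%nat + g (2 * k + 1)%nat) m.
Proof. induction m.
- simpl; auto.
- replace (2 * S m)%nat with (S (S (2 * m))) by lia.
  change (sumR g (S (S (2 * m)))) with (sumR g (2*m) + g (2*m)%nat + g (S (2*m))).
  rewrite IHm, sumR_S. replace (S (2*m)) with (2*m+1)%nat by lia. lra. Qed.

Lemma sumR_even1 g n : (forall k, g (2 * k + 1)%nat = 0) ->
  sumR g (S n) = sumR (fun k => g (2 * k)%nat) (n / 2 + 1).
Proof. intros Hg. destruct (Nat.Even_or_Odd n) as [[m ->]|[m ->]].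
- replace (2 * m / 2 + 1)%nat with (S m) by (rewrite Nat.mul_comm, Nat.div_mul; lia).
  rewrite !sumR_S, sumR_double. f_equal. apply sumR_ext; intros. rewrite Hg; lra.
- replace ((2 * m + 1) / 2 + 1)%nat with (S m).
  + replace (S (2*m+1)) with (2 * S m)%nat by lia. rewrite sumR_double.
    apply sumR_ext; intros. rewrite Hg; lra.
  + replace (2*m+1)%nat with (1 + m * 2)%nat by lia. rewrite Nat.div_add by lia. simpl. lia.
Qed.

Lemma sumR_even2 g n : (forall k, g (2 * k + 1)%nat = 0) ->
  sumR g n = sumR (fun k => g (2 * k)%nat) (n / 2) + (if Nat.even n then 0 else g (n - 1)%nat).
Proof. intros Hg. destruct (Nat.Even_or_Odd n) as [[m ->]|[m ->]].
- replace (2 * m / 2)%nat with m by (rewrite Nat.mul_comm, Nat.div_mul; lia).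
  rewrite Nat.even_even. rewrite sumR_double. rewrite Rplus_0_r. apply sumR_ext; intros. rewrite Hg; lra.
- replace ((2 * m + 1) / 2)%nat with m.
  + rewrite Nat.even_odd. replace (2*m+1-1)%nat with (2*m)%nat by lia.
    replace (2*m+1)%nat with (S (2*m)) by lia. rewrite sumR_S, sumR_double.
    f_equal. apply sumR_ext; intros. rewrite Hg; lra.
  + replace (2*m+1)%nat with (1 + m * 2)%nat by lia. rewrite Nat.div_add by lia. simpl. lia.
Qed.

Fixpoint bin (n k : nat) : R :=
  match n, k with
  | O, O => 1
  | O, S _ => 0
  | S n', O => 1
  | S n', S k' => bin n' k' + bin n' (S k')
  end.

Lemma bin_0 n : bin n 0 = 1. Proof. destruct n; auto. Qed.
Lemma bin_SS n k : bin (S n) (S k) = bin n k + bin n (S k). Proof. reflexivity. Qed.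
Lemma bin_gt n k : (n < k)%nat -> bin n k = 0.
Proof. revert k; induction n; intros k Hk; destruct k; simpl; try lia; auto.
  rewrite !IHn by lia. lra. Qed.
Lemma bin_nn n : bin n n = 1.
Proof. induction n; simpl; auto. rewrite IHn, bin_gt by lia. lra. Qed.

Lemma bin_absorb n k : (INR k + 1) * bin n (S k) = (INR n - INR k) * bin n k.
Proof. revert k; induction n; intros k.
- simpl. destruct k; simpl; lra.
- destruct k.
  + rewrite bin_SS, !bin_0. 
    assert (H := IHn 0%nat). rewrite bin_0 in H. rewrite S_INR. change (INR 0) with 0 in *. lra.
  + rewrite !bin_SS. assert (H1 := IHn k). assert (H2 := IHn (S k)).
    rewrite !S_INR in *. nra.
Qed.

Lemma bin_absorb2 n k : (INR k + 1) * bin (S n) (S k) = (INR n + 1) * bin n k.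
Proof. rewrite bin_SS. assert (H := bin_absorb n k). lra. Qed.

Lemma bin_C n k : (k <= n)%nat -> bin n k = binomN n k.
Proof. unfold binomN. revert k; induction n; intros k Hk.
- replace k with 0%nat by lia. unfold Binomial.C; simpl. lra.
- destruct k.
  + rewrite bin_0. unfold Binomial.C. rewrite Nat.sub_0_r. change (INR (fact 0)) with 1. field. apply INR_fact_neq_0.
  + rewrite bin_SS. destruct (Nat.eq_dec k n) as [->|Hne].
    * rewrite bin_nn, bin_gt by lia. unfold Binomial.C. rewrite Nat.sub_diag. 
      change (INR (fact 0)) with 1. field. apply INR_fact_neq_0.
    * rewrite !IHn by lia. apply pascal. lia.
Qed.

Definition T (z : R) (b : nat -> R) (n : nat) : R :=
  sumR (fun j => bin n j * z ^ (n - j) * b j) (S n).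

Lemma T_ext z b c n : (forall j, b j = c j) -> T z b n = T z c n.
Proof. intros H; unfold T; apply sumR_ext; intros; rewrite H; auto. Qed.

Lemma T_lin z a b c n : T z (fun j => a * b j + c j) n = a * T z b n + T z c n.
Proof. unfold T. rewrite <- sumR_scal, <- sumR_plus. apply sumR_ext; intros; ring. Qed.

Lemma T_step z b n : T z b (S n) = z * T z b n + T z (fun j => b (S j)) n.
Proof. unfold T. rewrite sumR_shift. rewrite bin_0, Nat.sub_0_r.
  transitivity (bin (S n) 0 * z ^ S n * b 0%nat +
    (sumR (fun i => bin n i * z ^ (n - i) * b (S i)) (S n) +
     sumR (fun i => bin n (S i) * z ^ (n - i) * b (S i)) (S n))).
  { rewrite bin_0, <- sumR_plus. f_equal. apply sumR_ext; intros. rewrite bin_SS.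
    replace (S n - S i)%nat with (n - i)%nat by lia. ring. }
  assert (E : z * sumR (fun j => bin n j * z ^ (n - j) * b j) (S n) =
     z ^ S n * b 0%nat + sumR (fun i => bin n (S i) * z ^ (n - i) * b (S i)) (S n)).
  { rewrite sumR_shift, bin_0, Nat.sub_0_r. rewrite (sumR_S _ n), (bin_gt n (S n)) by lia.
    simpl (z ^ S n).
    assert (E : sumR (fun i => bin n (S i) * z ^ (n - i) * b (S i)) n =
              sumR (fun i => z * (bin n (S i) * z ^ (n - S i) * b (S i))) n).
    { apply sumR_ext; intros. replace (n - i)%nat with (S (n - S i)) by lia. simpl. ring. }
    rewrite E, sumR_scal. ring. }
  rewrite E, bin_0. ring.
Qed.

Lemma T_0 z b : T z b 0 = b 0%nat.
Proof. unfold T. simpl. ring. Qed.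

Lemma T_comp z w n : forall b, T z (T w b) n = T (z + w) b n.
Proof. induction n; intros b.
- rewrite !T_0. reflexivity.
- rewrite T_step. 
  rewrite (T_ext z (fun j => T w b (S j)) (fun j => w * T w b j + T w (fun i => b (S i)) j))
    by (intros; apply T_step).
  rewrite T_lin, !IHn, T_step. ring.
Qed.

Lemma T_id b n : T 0 b n = b n.
Proof. unfold T. rewrite sumR_S, Nat.sub_diag, bin_nn.
  rewrite sumR_zero. simpl; ring.
  intros i Hi. replace (n - i)%nat with (S (n - S i)) by lia. simpl. ring. Qed.

Definition Q (n j : nat) : R := (H n - H j) / (INR n - INR j).

Lemma H_S n : H (S n) = H n + / INR (S n). Proof. reflexivity. Qed.
Lemma H2_S n : H2 (S n) = H2 n + / (INR (S n) ^ 2). Proof. reflexivity. Qed.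

Lemma Q_step n j : (j < n)%nat ->
  Q (S n) (S j) = Q n j - / ((INR n + 1) * (INR j + 1)).
Proof. intros Hj. unfold Q. rewrite !H_S, !S_INR.
  assert (INR j < INR n) by (apply lt_INR; auto).
  assert (0 <= INR j) by apply pos_INR.
  field. lra. Qed.

Lemma hockey n k : sumR (fun j => bin j k) n = bin n (S k).
Proof. induction n; simpl. { auto. } rewrite IHn. lra. Qed.

Lemma U_lemma n : H2 n = sumR (fun j => Q n j) n.
Proof. induction n. { reflexivity. }
  rewrite sumR_shift.
  rewrite (sumR_ext _ (fun i => Q n i - / ((INR n + 1) * (INR i + 1))))
    by (intros; apply Q_step; lia).
  rewrite sumR_minus. change (sumR (Q n) n) with (sumR (fun j => Q n j) n). rewrite <- IHn.
  rewrite (sumR_ext _ (fun i => / (INR n + 1) * / INR (S i))).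
  2:{ intros. rewrite S_INR. assert (0 <= INR i) by apply pos_INR. 
      assert (0 <= INR n) by apply pos_INR. field. lra. }
  rewrite sumR_scal.
  assert (HH : forall m, sumR (fun i => / INR (S i)) m = H m).
  { induction m. reflexivity. rewrite sumR_S, IHm. reflexivity. }
  rewrite HH. unfold Q. rewrite H2_S, H_S. simpl (H 0). simpl (INR 0).
  assert (0 <= INR n) by apply pos_INR. rewrite S_INR. field. lra.
Qed.

Lemma star n : forall k, bin n k * (H2 n - H2 k) = sumR (fun j => bin j k * Q n j) n.
Proof. induction n; intros k.
- simpl. destruct k; simpl; ring.
- destruct k.
  + rewrite !bin_0. rewrite (sumR_ext _ (fun j => Q (S n) j)) by (intros; rewrite bin_0; ring).
    rewrite <- U_lemma. simpl (H2 0). ring.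
  + rewrite sumR_shift. simpl (bin 0 (S k)). 
    rewrite (sumR_ext _ (fun i => (bin i k * Q n i + bin i (S k) * Q n i)
                                  - / (INR n + 1) * (/ (INR k + 1) * bin i k))).
    2:{ intros i Hi. rewrite bin_SS, Q_step by lia.
        assert (HA := bin_absorb2 i k). 
        assert (0 <= INR i) by apply pos_INR. assert (0 <= INR k) by apply pos_INR.
        assert (0 <= INR n) by apply pos_INR.
        assert (E : bin (S i) (S k) = (INR i + 1) / (INR k + 1) * bin i k).
        { apply (Rmult_eq_reg_l (INR k + 1)); [|lra]. rewrite HA. field. lra. }
        rewrite bin_SS in E. rewrite E. replace (bin i k * Q n i + bin i (S k) * Q n i) with ((bin i k + bin i (S k)) * Q n i) by ring. rewrite E. field. lra. }
    rewrite sumR_minus, sumR_plus, sumR_scal, sumR_scal, hockey, <- !IHn.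
    rewrite bin_SS, !H2_S.
    assert (HA := bin_absorb n k).
    assert (0 <= INR k) by apply pos_INR. assert (0 <= INR n) by apply pos_INR.
    rewrite !S_INR. 
    assert (E : bin n (S k) = (INR n - INR k) / (INR k + 1) * bin n k).
    { apply (Rmult_eq_reg_l (INR k + 1)); [|lra]. rewrite HA. field. lra. }
    rewrite E. field. lra.
Qed.

Lemma harm_exchange z b n :
  sumR (fun k => bin n k * z ^ (n - k) * b k * H2 k) (S n) =
  T z b n * H2 n - sumR (fun j => z ^ (n - j) * Q n j * T z b j) n.
Proof.
  transitivity (T z b n * H2 n - sumR (fun k => z ^ (n - k) * b k * (bin n k * (H2 n - H2 k))) (S n)).
  { unfold T. rewrite Rmult_comm, <- sumR_scal, <- sumR_minus. apply sumR_ext; intros; ring. }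
  f_equal.
  rewrite (sumR_ext _ (fun k => sumR (fun j => z ^ (n - k) * b k * (bin j k * Q n j)) n)).
  2:{ intros. rewrite star, <- sumR_scal. auto. }
  rewrite sumR_swap. apply sumR_ext. intros j Hj.
  unfold T. rewrite <- sumR_scal.
  rewrite (sumR_tail _ (S j) (S n)); [| lia |].
  2:{ intros i H1 H2. rewrite bin_gt by lia. ring. }
  apply sumR_ext; intros i Hi.
  replace (n - i)%nat with ((n - j) + (j - i))%nat by lia. rewrite pow_add. ring.
Qed.

Section Core.
Variable v : R.
Hypothesis hv : forall m : nat, v <> - INR (S m).

Fixpoint cc (k : nat) : R := match k with O => 1
  | S k' => 2 * (2 * INR k' + v + 1) / (INR k' + v + 1) * cc k' end.
Fixpoint dd (k : nat) : R := match k with O => 1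
  | S k' => (INR k' + 1) / (v / 2 + INR k' + 1) * dd k' end.
Fixpoint ee (j : nat) : R := match j with O => 1 | S O => 0
  | S (S j') => 4 * (INR j' + 1) / (v + INR j' + 2) * ee j' end.

Lemma ee_SS j : ee (S (S j)) = 4 * (INR j + 1) / (v + INR j + 2) * ee j.
Proof. reflexivity. Qed.

Lemma hv1 k : INR k + v + 1 <> 0.
Proof. intros E. apply (hv k). rewrite S_INR. lra. Qed.
Lemma hv2 j : v + INR j + 2 <> 0.
Proof. intros E. apply (hv (S j)). rewrite !S_INR. lra. Qed.

Lemma ee_odd k : ee (2 * k + 1) = 0.
Proof. induction k. reflexivity.
  replace (2 * S k + 1)%nat with (S (S (2 * k + 1))) by lia. change (ee (S (S (2*k+1)))) with (4 * (INR (2*k+1) + 1) / (v + INR (2*k+1) + 2) * ee (2*k+1)). rewrite IHk. ring. Qed.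

Lemma C_central k : binomN (2 * S k) (S k) * (INR k + 1) = 2 * (2 * INR k + 1) * binomN (2 * k) k.
Proof. unfold binomN, Binomial.C.
  replace (2 * S k - S k)%nat with (S k) by lia. replace (2 * k - k)%nat with k by lia.
  replace (2 * S k)%nat with (S (S (2 * k))) by lia.
  rewrite !fact_simpl, !mult_INR, !S_INR, mult_INR. simpl (INR 2).
  assert (INR (fact k) <> 0) by apply INR_fact_neq_0.
  assert (INR (fact (2*k)) <> 0) by apply INR_fact_neq_0.
  assert (0 <= INR k) by apply pos_INR.
  field. repeat split; lra.
Qed.

Lemma ee_even k : ee (2 * k) = binomN (2 * k) k * dd k.
Proof. induction k.
- unfold binomN, Binomial.C. simpl. field.
- replace (2 * S k)%nat with (S (S (2 * k))) by lia. rewrite ee_SS.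
  rewrite IHk. replace (S (S (2 * k))) with (2 * S k)%nat by lia.
  assert (E := C_central k). simpl dd.
  assert (0 <= INR k) by apply pos_INR.
  assert (HH := hv2 (2 * k)). rewrite mult_INR in HH. simpl (INR 2) in HH.
  assert (E2 : binomN (2 * S k) (S k) = 2 * (2 * INR k + 1) * binomN (2 * k) k / (INR k + 1)).
  { rewrite <- E. field. lra. }
  rewrite E2, mult_INR. simpl (INR 2). field. split; [|lra]. intros Z. apply HH. lra.
Qed.

Lemma pow_add_helper n j : (j <= n)%nat -> (2:R) ^ n = 2 ^ (n - j) * 2 ^ j.
Proof. intros. rewrite <- pow_add. f_equal. lia. Qed.

Lemma bin_pow n j : bin n j * 2 ^ (n - j) = bin n j * 2 ^ n / 2 ^ j.
Proof. destruct (le_lt_dec j n) as [Hj|Hj].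
- rewrite (pow_add_helper n j Hj). field. apply pow_nonzero. lra.
- rewrite bin_gt by auto. field. apply pow_nonzero. lra.
Qed.

Definition a n j := bin n j * 2 ^ n / 2 ^ j * ee j.

Lemma T2_a n : T 2 ee n = sumR (a n) (S n).
Proof. unfold T, a. apply sumR_ext; intros. rewrite bin_pow. auto. Qed.

Lemma pointwise n j :
  (INR n + v + 1) * a (S n) (S (S j)) =
  2 * (INR n + v + 3 + INR j) * a n (S (S j)) + 2 * (INR n - INR j) * a n j.
Proof. unfold a. rewrite !ee_SS. rewrite bin_SS.
  assert (A1 := bin_absorb n j). assert (A2 := bin_absorb n (S j)).
  rewrite S_INR in A2.
  assert (0 <= INR j) by apply pos_INR.
  assert (E1 : bin n (S j) = (INR n - INR j) / (INR j + 1) * bin n j).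
  { apply (Rmult_eq_reg_l (INR j + 1)); [|lra]. rewrite A1. field. lra. }
  assert (E2 : bin n (S (S j)) = (INR n - (INR j + 1)) / (INR j + 1 + 1) * bin n (S j)).
  { apply (Rmult_eq_reg_l (INR j + 1 + 1)); [|lra]. rewrite A2. field. lra. }
  rewrite E2, E1. assert (HH := hv2 j).
  assert (2 ^ j <> 0) by (apply pow_nonzero; lra).
  simpl pow. field. repeat split; lra.
Qed.

Lemma zeil n : (INR n + v + 1) * T 2 ee (S n) = 2 * (2 * INR n + v + 1) * T 2 ee n.
Proof. rewrite !T2_a.
  rewrite sumR_shift, sumR_shift.
  rewrite Rmult_plus_distr_l, Rmult_plus_distr_l, <- sumR_scal.
  rewrite (sumR_ext (fun i => (INR n + v + 1) * a (S n) (S (S i)))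
     (fun i => 2 * (INR n + v + 3 + INR i) * a n (S (S i)) + 2 * (INR n - INR i) * a n i))
     by (intros; apply pointwise).
  rewrite sumR_plus.
  assert (R1 : 2 * (2 * INR n + v + 1) * sumR (a n) (S n) =
     sumR (fun i => 2 * (INR n + v + 1 + INR i) * a n i) (S (S n)) +
     sumR (fun i => 2 * (INR n - INR i) * a n i) (S n)).
  { rewrite (sumR_S _ (S n)). unfold a at 3. rewrite (bin_gt n (S n)) by lia.
    replace (2 * (INR n + v + 1 + INR (S n)) * (0 * 2 ^ n / 2 ^ S n * ee (S n))) with 0 by (unfold Rdiv; ring).
    rewrite Rplus_0_r, <- sumR_scal, <- sumR_plus. apply sumR_ext; intros; ring. }
  rewrite R1. rewrite (sumR_S (fun i => 2 * (INR n - INR i) * a n i) n).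
  rewrite (sumR_shift _ (S n)), sumR_shift.
  unfold a at 1 2 5 6. simpl ee. rewrite !bin_0.
  rewrite (sumR_ext (fun i => 2 * (INR n + v + 1 + INR (S (S i))) * a n (S (S i)))
      (fun i => 2 * (INR n + v + 3 + INR i) * a n (S (S i)))).
  2:{ intros. rewrite !S_INR. ring. }
  simpl pow. change (INR 0) with 0. change (INR 1) with 1. field.
Qed.

Lemma B_id n : T 2 ee n = cc n.
Proof. induction n.
- rewrite T_0. reflexivity.
- assert (Z := zeil n). simpl cc. rewrite <- IHn. assert (HH := hv1 n).
  apply (Rmult_eq_reg_l (INR n + v + 1)); auto. rewrite Z. field. auto.
Qed.

Lemma Binv n : T (-2) cc n = ee n.
Proof. rewrite (T_ext _ cc (T 2 ee)) by (intros; symmetry; apply B_id).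
  rewrite T_comp. replace (-2 + 2) with 0 by ring. apply T_id. Qed.

End Core.

Lemma m2pow k : (-2) ^ (2 * k) = 2 ^ (2 * k).
Proof. rewrite !pow_mult. f_equal. ring. Qed.

Lemma core3 v (hv : forall m : nat, v <> - INR (S m)) n :
  sumR (fun k => binomN n (2 * k) * 2 ^ (n - 2 * k) * binomN (2 * k) k * dd v k * H2 (2 * k)) (n / 2 + 1)
  = cc v n * H2 n - sumR (fun k => cc v k * 2 ^ (n - k) * Q n k) n.
Proof.
  assert (HX := harm_exchange 2 (ee v) n).
  rewrite (B_id v hv n) in HX.
  rewrite (sumR_ext (fun j => 2 ^ (n - j) * Q n j * T 2 (ee v) j) (fun k => cc v k * 2 ^ (n - k) * Q n k)) in HX
    by (intros; rewrite (B_id v hv); ring).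
  rewrite <- HX. rewrite sumR_even1.
  2:{ intros k. rewrite ee_odd. ring. }
  apply sumR_ext. intros k Hk.
  assert (Hk2 : (2 * k <= n)%nat).
  { assert (2 * (n / 2) <= n)%nat by (apply Nat.Div0.mul_div_le; lia). lia. }
  rewrite bin_C by auto. rewrite ee_even by auto. ring.
Qed.

Lemma pow_split x n j : (j <= n)%nat -> x ^ n = x ^ (n - j) * x ^ j.
Proof. intros. rewrite <- pow_add. f_equal. lia. Qed.

Lemma sign_pow n k : (k <= n)%nat -> (-1) ^ k / 2 ^ k = (-2) ^ (n - k) / (-2) ^ n.
Proof. intros Hk. replace (n) with ((n - k) + k)%nat at 2 by lia. rewrite pow_add.
  assert ((-2) ^ k <> 0) by (apply pow_nonzero; lra).
  assert ((-2) ^ (n - k) <> 0) by (apply pow_nonzero; lra).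
  replace ((-2) ^ (n - k) / ((-2) ^ (n - k) * (-2) ^ k)) with (/ (-2) ^ k) by (field; auto).
  replace (-2) with ((-1) * 2) by ring. rewrite !Rpow_mult_distr.
  assert ((-1) ^ k <> 0) by (apply pow_nonzero; lra).
  assert ((2:R) ^ k <> 0) by (apply pow_nonzero; lra).
  assert (E : (-1) ^ k * (-1) ^ k = 1).
  { rewrite <- Rpow_mult_distr. replace (-1 * -1) with 1 by ring. apply pow1. }
  rewrite Rinv_mult. unfold Rdiv. f_equal.
  apply (Rmult_eq_reg_l ((-1) ^ k)); auto. rewrite Rinv_r; auto.
Qed.

Lemma core4 v (hv : forall m : nat, v <> - INR (S m)) n :
  sumR (fun k => (-1) ^ k * binomN n k / 2 ^ k * cc v k * H2 k) (n + 1)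
  = - sumR (fun k => binomN (2 * k) k / 2 ^ (2 * k) * dd v k * Q n (2 * k)) (n / 2)
    + (if Nat.even n
       then binomN n (n / 2) / 2 ^ n * dd v (n / 2) * H2 n
       else - (binomN (n - 1) ((n - 1) / 2) * (2 / 2 ^ n) * dd v ((n - 1) / 2) * / INR n)).
Proof.
  assert (HX := harm_exchange (-2) (cc v) n).
  rewrite (Binv v hv n) in HX.
  rewrite (sumR_ext (fun j => (-2) ^ (n - j) * Q n j * T (-2) (cc v) j) (fun j => (-2) ^ (n - j) * Q n j * ee v j)) in HX
    by (intros; rewrite (Binv v hv); ring).
  assert (Hn : (-2) ^ n <> 0) by (apply pow_nonzero; lra).
  rewrite Nat.add_1_r.
  transitivity (/ (-2) ^ n * sumR (fun k => bin n k * (-2) ^ (n - k) * cc v k * H2 k) (S n)).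
  { rewrite <- sumR_scal. apply sumR_ext. intros k Hk.
    rewrite bin_C by lia. 
    replace ((-1) ^ k * binomN n k / 2 ^ k) with (binomN n k * ((-1) ^ k / 2 ^ k)) by (unfold Rdiv; ring).
    rewrite (sign_pow n k) by lia. field. auto. }
  rewrite HX. clear HX.
  rewrite Rmult_minus_distr_l, <- sumR_scal.
  rewrite (sumR_ext _ (fun j => Q n j * ee v j / (-2) ^ j)).
  2:{ intros j Hj. rewrite (pow_split (-2) n j) by lia.
      assert ((-2) ^ j <> 0) by (apply pow_nonzero; lra).
      assert ((-2) ^ (n - j) <> 0) by (apply pow_nonzero; lra). field. auto. }
  rewrite sumR_even2.
  2:{ intros k. rewrite ee_odd. unfold Rdiv. ring. }
  destruct (Nat.Even_or_Odd n) as [[m ->]|[m ->]].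
  - rewrite Nat.even_even. 
    replace (2 * m / 2)%nat with m by (rewrite Nat.mul_comm, Nat.div_mul; lia).
    rewrite (ee_even v hv), m2pow.
    rewrite (sumR_ext (fun k => Q (2 * m) (2 * k) * ee v (2 * k) / (-2) ^ (2 * k))
               (fun k => binomN (2 * k) k / 2 ^ (2 * k) * dd v k * Q (2 * m) (2 * k))).
    2:{ intros. rewrite (ee_even v hv), m2pow. field. apply pow_nonzero; lra. }
    field. apply pow_nonzero; lra.
  - rewrite Nat.even_odd.
    replace ((2 * m + 1) / 2)%nat with m.
    2:{ replace (2*m+1)%nat with (1 + m * 2)%nat by lia. rewrite Nat.div_add by lia. simpl. lia. }
    replace ((2 * m + 1 - 1) / 2)%nat with m.
    2:{ replace (2*m+1-1)%nat with (m * 2)%nat by lia. rewrite Nat.div_mul by lia. auto. }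
    replace (2 * m + 1 - 1)%nat with (2 * m)%nat by lia.
    replace (2 * m + 1)%nat with (S (2 * m)) by lia.
    rewrite (sumR_ext (fun k => Q (S (2 * m)) (2 * k) * ee v (2 * k) / (-2) ^ (2 * k))
               (fun k => binomN (2 * k) k / 2 ^ (2 * k) * dd v k * Q (S (2 * m)) (2 * k))).
    2:{ intros. rewrite (ee_even v hv), m2pow. field. apply pow_nonzero; lra. }
    replace (S (2 * m)) with (2 * m + 1)%nat at 2 3 by lia. rewrite ee_odd.
    rewrite (ee_even v hv), m2pow. unfold Q. rewrite H_S. 
    replace (2 * m + 1)%nat with (S (2 * m)) by lia. rewrite S_INR.
    replace ((-2) ^ S (2 * m)) with (- 2 * 2 ^ (2 * m)) by (change ((-2)^S (2*m)) with (-2 * (-2)^(2*m)); rewrite m2pow; ring).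
    change (2 ^ S (2 * m)) with (2 * 2 ^ (2 * m)).
    assert (0 <= INR (2 * m)) by apply pos_INR.
    assert ((2:R) ^ (2 * m) <> 0) by (apply pow_nonzero; lra).
    field. lra.
Qed.

Definition sq (x : R) (n : nat) : R :=
  INR (fact n) * Rpower (INR n) x / prod_f_R0 (fun j => x + INR j) n.

Definition nonpole (x : R) := forall m : nat, x <> - INR m.

Lemma exp_le' a b : a <= b -> exp a <= exp b.
Proof. intros [H|H]. left; apply exp_increasing; auto. rewrite H; lra. Qed.

Lemma prod_nz x n : nonpole x -> prod_f_R0 (fun j => x + INR j) n <> 0.
Proof. intros Hx. induction n.
- intros E. apply (Hx 0%nat). cbn [prod_f_R0] in E. lra.
- intros E. cbn [prod_f_R0] in E. apply Rmult_integral in E. destruct E as [E|E]; [auto| apply (Hx (S n)); lra].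
Qed.

Lemma prod_pos x n : 0 < x -> 0 < prod_f_R0 (fun j => x + INR j) n.
Proof. intros Hx. induction n; cbn [prod_f_R0].
- change (INR 0) with 0. lra.
- apply Rmult_lt_0_compat; auto. assert (0 <= INR (S n)) by apply pos_INR. lra. Qed.

Lemma prod_shift x n :
  x * prod_f_R0 (fun j => x + 1 + INR j) n = prod_f_R0 (fun j => x + INR j) (S n).
Proof. induction n.
- simpl. ring.
- change (prod_f_R0 (fun j => x + 1 + INR j) (S n)) with
    (prod_f_R0 (fun j => x + 1 + INR j) n * (x + 1 + INR (S n))).
  change (prod_f_R0 (fun j => x + INR j) (S (S n))) with
    (prod_f_R0 (fun j => x + INR j) (S n) * (x + INR (S (S n)))).
  rewrite <- IHn. rewrite (S_INR (S n)). ring. Qed.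

Lemma sq_rel x n : nonpole x -> (1 <= n)%nat ->
  sq (x + 1) n = sq x n * (x * INR n / (x + INR n + 1)).
Proof. intros Hx Hn. unfold sq.
  assert (Hn' : 0 < INR n) by (apply lt_0_INR; lia).
  rewrite Rpower_plus, Rpower_1 by auto.
  assert (Hx0 : x <> 0) by (intros E; apply (Hx 0%nat); simpl; lra).
  assert (HP := prod_nz x n Hx).
  assert (HS : x + INR n + 1 <> 0) by (intros E; apply (Hx (S n)); rewrite S_INR; lra).
  assert (E : prod_f_R0 (fun j => x + 1 + INR j) n = prod_f_R0 (fun j => x + INR j) n * (x + INR n + 1) / x).
  { apply (Rmult_eq_reg_l x); auto. rewrite prod_shift. cbn [prod_f_R0]. rewrite S_INR. field. auto. }
  rewrite E. field. repeat split; auto.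
Qed.

Lemma lim_invn : is_lim_seq (fun n => / INR n) 0.
Proof. replace (Finite 0) with (Rbar_inv p_infty) by reflexivity.
  apply is_lim_seq_inv. apply is_lim_seq_INR. discriminate. Qed.

Lemma lim_aux c : is_lim_seq (fun n => 1 + c * / INR n) 1.
Proof. assert (H : is_lim_seq (fun n => 1 + c * / INR n) (1 + c * 0)).
  { apply is_lim_seq_plus'. apply is_lim_seq_const.
    apply is_lim_seq_mult'. apply is_lim_seq_const. apply lim_invn. }
  replace (1 + c * 0) with 1 in H by ring. exact H.
Qed.

Lemma lim_ratio1 x : is_lim_seq (fun n => INR n / (x + INR n + 1)) 1.
Proof.
  apply is_lim_seq_ext_loc with (u := fun n => / (1 + (x + 1) * / INR n)).
  - exists 1%nat. intros n Hn. assert (0 < INR n) by (apply lt_0_INR; lia).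
    destruct (Req_dec (x + INR n + 1) 0) as [E|E].
    + rewrite E. replace (1 + (x + 1) * / INR n) with ((x + INR n + 1) / INR n) by (field; lra).
      rewrite E. unfold Rdiv. rewrite Rmult_0_l, !Rinv_0. ring.
    + field. split; auto. lra. 
  - replace (Finite 1) with (Rbar_inv 1) by (simpl; f_equal; field).
    apply is_lim_seq_inv. apply lim_aux. intros E; injection E; lra.
Qed.

Lemma expb t : 0 <= t -> / (1 + t) <= exp (- t + t ^ 2).
Proof. intros Ht.
  assert (H1 := exp_ineq1_le (- (t / (1 + t)))).
  replace (1 + - (t / (1 + t))) with (/ (1 + t)) in H1 by (field; lra).
  eapply Rle_trans; [apply H1|]. apply exp_le'.
  assert (0 <= t ^ 3) by (apply pow_le; auto).
  apply (Rmult_le_reg_l (1 + t)); [lra|]. field_simplify; [|lra]. nra.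
Qed.

Lemma H2_S' n : H2 (S n) = H2 n + / (INR (S n) ^ 2). Proof. reflexivity. Qed.
Lemma H_S' n : H (S n) = H n + / INR (S n). Proof. reflexivity. Qed.

Lemma H2_bound1 n : H2 (S n) <= 2 - / INR (S n).
Proof. induction n.
- change (H2 1) with (0 + / (INR 1 ^ 2)). change (INR 1) with 1. lra.
- rewrite H2_S'. assert (0 <= INR n) by apply pos_INR. rewrite !S_INR in *.
  assert (/ (INR n + 1 + 1) ^ 2 <= / (INR n + 1) - / (INR n + 1 + 1)).
  { apply (Rmult_le_reg_l ((INR n + 1) * (INR n + 1 + 1) ^ 2)). nra.
    field_simplify; try lra. }
  lra.
Qed.

Lemma H2_bound n : H2 n <= 2.
Proof. destruct n. simpl; lra. assert (H := H2_bound1 n).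
  assert (0 < INR (S n)) by (apply lt_0_INR; lia).
  assert (0 < / INR (S n)) by (apply Rinv_0_lt_compat; auto). lra. Qed.

Lemma H_exp n : INR (S n) <= exp (H n).
Proof. induction n.
- simpl. rewrite exp_0. lra.
- rewrite H_S', exp_plus. assert (H1 := exp_ineq1_le (/ INR (S n))).
  assert (0 < INR (S n)) by (apply lt_0_INR; lia).
  rewrite (S_INR (S n)).
  assert (INR (S n) + 1 = INR (S n) * (1 + / INR (S n))) by (field; lra).
  rewrite H0. apply Rmult_le_compat; try lra. 
  assert (0 < / INR (S n)) by (apply Rinv_0_lt_compat; auto). lra.
Qed.

Lemma ln_H n : (1 <= n)%nat -> ln (INR n) <= H n.
Proof. intros Hn. rewrite <- (ln_exp (H n)). apply ln_le. apply lt_0_INR; lia.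
  assert (H1 := H_exp n). rewrite S_INR in H1. lra. Qed.

Section Pos.
Variable x : R.
Hypothesis hx : 0 < x.

Definition qq n := INR (fact n) / prod_f_R0 (fun j => x + INR j) n.

Lemma qq_pos n : 0 < qq n.
Proof. unfold qq. apply Rdiv_lt_0_compat. apply lt_0_INR. apply lt_O_fact. apply prod_pos; auto. Qed.

Lemma qq_S n : qq (S n) = qq n * (INR (S n) / (x + INR (S n))).
Proof. unfold qq. rewrite fact_simpl, mult_INR. cbn [prod_f_R0].
  assert (HP := prod_pos x n hx). assert (0 <= INR (S n)) by apply pos_INR.
  field. lra. Qed.

Lemma sq_qq n : sq x n = qq n * exp (x * ln (INR n)).
Proof. unfold sq, qq, Rpower. field. apply Rgt_not_eq, prod_pos; auto. Qed.

Lemma qq_bound n : x * qq n <= exp (- x * H n + x ^ 2 * H2 n).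
Proof. induction n.
- unfold qq. cbn [fact prod_f_R0 H H2]. replace (- x * 0 + x ^ 2 * 0) with 0 by ring. rewrite exp_0. change (INR 0) with 0. change (INR 1) with 1.
  right. field. lra.
- rewrite qq_S, H_S', H2_S'.
  assert (Hp : 0 < INR (S n)) by (apply lt_0_INR; lia).
  set (t := x / INR (S n)).
  assert (Ht : 0 <= t) by (unfold t; apply Rlt_le, Rdiv_lt_0_compat; auto).
  assert (E1 : INR (S n) / (x + INR (S n)) = / (1 + t)) by (unfold t; field; lra).
  assert (E2 : - x * (H n + / INR (S n)) + x ^ 2 * (H2 n + / INR (S n) ^ 2)
             = (- x * H n + x ^ 2 * H2 n) + (- t + t ^ 2)) by (unfold t; field; lra).
  rewrite E1, E2, exp_plus. rewrite <- Rmult_assoc.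
  apply Rmult_le_compat; auto.
  + apply Rmult_le_pos; [lra | apply Rlt_le, qq_pos].
  + apply Rlt_le, Rinv_0_lt_compat; lra.
  + apply expb; auto.
Qed.

Lemma sq_bound n : (1 <= n)%nat -> sq x n <= exp (2 * x ^ 2) / x.
Proof. intros Hn. rewrite sq_qq.
  assert (B := qq_bound n). assert (L := ln_H n Hn). assert (H2b := H2_bound n).
  assert (HQ := qq_pos n).
  assert (Hq : qq n <= exp (- x * H n + x ^ 2 * H2 n) / x).
  { apply (Rmult_le_reg_l x); auto. field_simplify; lra. }
  eapply Rle_trans. apply Rmult_le_compat_r. apply Rlt_le, exp_pos. apply Hq.
  unfold Rdiv. rewrite Rmult_assoc, (Rmult_comm (/ x)), <- Rmult_assoc, <- exp_plus.
  apply Rmult_le_compat_r. apply Rlt_le, Rinv_0_lt_compat; auto.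
  apply exp_le'. assert (0 <= x^2) by (apply pow2_ge_0). nra.
Qed.

Lemma sq_mono n : (1 <= n)%nat -> sq x n <= sq x (S n).
Proof. intros Hn. rewrite !sq_qq, qq_S.
  assert (Hn0 : 0 < INR n) by (apply lt_0_INR; lia).
  assert (HS : INR (S n) = INR n + 1) by apply S_INR.
  assert (HQ := qq_pos n).
  assert (Hd : / INR (S n) <= ln (INR (S n)) - ln (INR n)).
  { assert (E : ln (INR n) = ln (INR (S n)) + ln (INR n / INR (S n))).
    { rewrite <- ln_mult. f_equal. field. lra. lra. apply Rdiv_lt_0_compat; lra. }
    assert (H1 := exp_ineq1_le (ln (INR n / INR (S n)))).
    rewrite exp_ln in H1 by (apply Rdiv_lt_0_compat; lra).
    assert (INR n / INR (S n) = 1 - / INR (S n)) by (rewrite HS; field; lra). lra. }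
  set (d := ln (INR (S n)) - ln (INR n)) in *.
  replace (x * ln (INR (S n))) with (x * ln (INR n) + x * d) by (unfold d; ring).
  rewrite exp_plus.
  assert (H1 := exp_ineq1_le (x * d)).
  assert (E := exp_pos (x * ln (INR n))).
  assert (x / INR (S n) <= x * d).
  { unfold Rdiv. apply Rmult_le_compat_l; lra. }
  assert (1 <= INR (S n) / (x + INR (S n)) * exp (x * d)).
  { apply (Rmult_le_reg_l (x + INR (S n))). lra. field_simplify; [|lra].
    assert (Ex : x + INR (S n) = INR (S n) * (1 + x / INR (S n))) by (field; lra).
    rewrite Ex at 1. apply Rmult_le_compat_l; lra. }
  replace (qq n * (INR (S n) / (x + INR (S n))) * (exp (x * ln (INR n)) * exp (x * d)))
    with ((qq n * exp (x * ln (INR n))) * (INR (S n) / (x + INR (S n)) * exp (x * d))) by ring.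
  rewrite <- (Rmult_1_r (qq n * exp (x * ln (INR n)))) at 1.
  apply Rmult_le_compat_l; auto. apply Rlt_le, Rmult_lt_0_compat; auto.
Qed.

Lemma sq_pos n : 0 < sq x n.
Proof. rewrite sq_qq. apply Rmult_lt_0_compat. apply qq_pos. apply exp_pos. Qed.

Lemma pos_lim : exists L, 0 < L /\ is_lim_seq (sq x) L.
Proof.
  set (u := fun n => sq x (S n)).
  assert (Hm : forall n, u n <= u (S n)) by (intros; unfold u; apply sq_mono; lia).
  assert (Hb : forall n, u n <= exp (2 * x ^ 2) / x) by (intros; unfold u; apply sq_bound; lia).
  destruct (ex_finite_lim_seq_incr u _ Hm Hb) as [l Hl].
  exists l. split.
  - assert (H0 : forall n, u 0%nat <= u n).
    { induction n. lra. eapply Rle_trans; [apply IHn| apply Hm]. }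
    assert (Hle := is_lim_seq_le (fun _ => u 0%nat) u (u 0%nat) l H0 (is_lim_seq_const _) Hl).
    simpl in Hle. assert (0 < u 0%nat) by (unfold u; apply sq_pos). lra.
  - apply is_lim_seq_incr_1. exact Hl.
Qed.
End Pos.

Lemma nonpole_S x : nonpole x -> nonpole (x + 1).
Proof. intros Hx m E. apply (Hx (S m)). rewrite S_INR. lra. Qed.

Lemma GL m : forall x, 0 < x + INR m -> nonpole x -> exists L, L <> 0 /\ is_lim_seq (sq x) L.
Proof. induction m; intros x Hm Hx.
- change (INR 0) with 0 in Hm. destruct (pos_lim x) as [L [HL1 HL2]]. lra.
  exists L; split; auto; lra.
- destruct (IHm (x + 1)) as [L [HL1 HL2]]. rewrite S_INR in Hm; lra. apply nonpole_S; auto.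
  assert (Hx0 : x <> 0) by (intros E; apply (Hx 0%nat); simpl; lra).
  exists (L * / x). split. apply Rmult_integral_contrapositive; split; auto. apply Rinv_neq_0_compat; auto.
  apply is_lim_seq_ext_loc with (u := fun n => sq (x + 1) n * (/ x * (1 + (x + 1) * / INR n))).
  + exists 1%nat. intros n Hn. rewrite sq_rel by auto.
    assert (0 < INR n) by (apply lt_0_INR; lia).
    assert (HS : x + INR n + 1 <> 0) by (intros E; apply (Hx (S n)); rewrite S_INR; lra).
    field. repeat split; auto. lra.
  + replace (L * / x) with (L * (/ x * 1)) by ring.
    apply is_lim_seq_mult'; auto. apply is_lim_seq_mult'. apply is_lim_seq_const. apply lim_aux.
Qed.

Lemma GLall x : nonpole x -> exists L, L <> 0 /\ is_lim_seq (sq x) L.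
Proof. intros Hx. destruct (INR_unbounded (- x)) as [m Hm]. apply (GL m); auto. lra. Qed.

Lemma Gamma_eq x (L : R) : is_lim_seq (sq x) L -> Gamma x = L.
Proof. intros HL. unfold Gamma. change (real (Lim_seq (sq x)) = L).
  rewrite (is_lim_seq_unique _ _ HL). reflexivity. Qed.

Lemma Gamma_nz x : nonpole x -> Gamma x <> 0.
Proof. intros Hx. destruct (GLall x Hx) as [L [HL1 HL2]]. rewrite (Gamma_eq x L); auto. Qed.

Lemma Gamma_FE x : nonpole x -> Gamma (x + 1) = x * Gamma x.
Proof. intros Hx. destruct (GLall x Hx) as [L [HL1 HL2]]. rewrite (Gamma_eq x L) by auto.
  apply Gamma_eq.
  apply is_lim_seq_ext_loc with (u := fun n => sq x n * (x * (INR n / (x + INR n + 1)))).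
  - exists 1%nat. intros n Hn. rewrite sq_rel by auto. unfold Rdiv. ring.
  - replace (x * L) with (L * (x * 1)) by ring.
    apply is_lim_seq_mult'; auto. apply is_lim_seq_mult'. apply is_lim_seq_const. apply lim_ratio1.
Qed.

Lemma prod_fact n : prod_f_R0 (fun j => 1 + INR j) n = INR (fact (S n)).
Proof. induction n. simpl. lra.
  cbn [prod_f_R0]. rewrite IHn. rewrite (fact_simpl (S n)), mult_INR, (S_INR (S n)). ring. Qed.

Lemma Gamma_1 : Gamma 1 = 1.
Proof. apply Gamma_eq.
  apply is_lim_seq_ext_loc with (u := fun n => INR n / (0 + INR n + 1)).
  - exists 1%nat. intros n Hn. unfold sq. rewrite prod_fact, Rpower_1 by (apply lt_0_INR; lia).
    rewrite fact_simpl, mult_INR, S_INR. assert (INR (fact n) <> 0) by apply INR_fact_neq_0.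
    assert (0 <= INR n) by apply pos_INR. field. lra.
  - apply lim_ratio1.
Qed.

Fixpoint rf (x : R) (k : nat) : R := match k with O => 1 | S k' => rf x k' * (x + INR k') end.

Lemma Gamma_shift x k : nonpole x -> Gamma (x + INR k) = rf x k * Gamma x.
Proof. intros Hx. induction k.
- simpl. rewrite Rplus_0_r. ring.
- rewrite S_INR. replace (x + (INR k + 1)) with ((x + INR k) + 1) by ring.
  rewrite Gamma_FE, IHk. simpl. ring.
  intros m E. apply (Hx (m + k)%nat). rewrite plus_INR. lra.
Qed.

Lemma rf_nz x k : nonpole x -> rf x k <> 0.
Proof. intros Hx. induction k; simpl. lra.
  apply Rmult_integral_contrapositive; split; auto. intros E. apply (Hx k). lra. Qed.

Lemma rf_fact k : rf 1 k = INR (fact k).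
Proof. induction k. reflexivity. simpl rf. rewrite IHk, fact_simpl, mult_INR, S_INR. ring. Qed.

Lemma hv0 : forall m : nat, 0 <> - INR (S m).
Proof. intros m E. assert (0 < INR (S m)) by (apply lt_0_INR; lia). lra. Qed.

Lemma dd0 k : dd 0 k = 1.
Proof. induction k. reflexivity. simpl dd. rewrite IHk. assert (0 <= INR k) by apply pos_INR.
  field. lra. Qed.

Lemma cc0 k : cc 0 k = binomN (2 * k) k.
Proof. induction k. unfold binomN, Binomial.C. simpl. field.
  simpl cc. rewrite IHk. assert (E := C_central k). assert (0 <= INR k) by apply pos_INR.
  apply (Rmult_eq_reg_r (INR k + 1)); [|lra]. rewrite E. field. lra. Qed.

Section V.
Variable v : R.
Hypothesis hv : forall m : nat, v <> - INR (S m).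

Lemma np_half : nonpole (v / 2 + 1).
Proof. intros m E. apply (hv (S (2 * m))). assert (HI : INR (S (S (2 * m))) = 2 * INR m + 2) by (rewrite !S_INR, mult_INR; simpl; ring). rewrite HI. lra. Qed.
Lemma np_v1 : nonpole (v + 1).
Proof. intros m E. apply (hv m). rewrite S_INR. lra. Qed.
Lemma np_1 : nonpole 1.
Proof. intros m E. assert (0 <= INR m) by apply pos_INR. lra. Qed.

Lemma dd_rf k : dd v k = INR (fact k) / rf (v / 2 + 1) k.
Proof. induction k. simpl. field.
  simpl dd. simpl rf. rewrite IHk. rewrite fact_simpl, mult_INR, S_INR.
  assert (H1 := rf_nz _ k np_half). assert (H2 : v / 2 + 1 + INR k <> 0) by (intros E; apply (np_half k); lra).
  field. split; auto. intros E; apply H2; lra. Qed.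

Lemma rf_add x a b : rf x (a + b) = rf x a * rf (x + INR a) b.
Proof. induction b. rewrite Nat.add_0_r. simpl. ring.
  rewrite Nat.add_succ_r. simpl. rewrite IHb, plus_INR. ring. Qed.

Lemma rf_S x k : rf x (S k) = rf x k * (x + INR k). Proof. reflexivity. Qed.

Lemma cc_rf k : cc v k = rf (v + 1) (2 * k) / (rf (v / 2 + 1) k * rf (v + 1) k).
Proof. induction k. simpl. field.
  replace (2 * S k)%nat with (S (S (2 * k))) by lia.
  simpl cc. rewrite !rf_S. rewrite IHk.
  assert (H1 := rf_nz _ k np_half). assert (H2 := rf_nz _ k np_v1).
  assert (H3 : v / 2 + 1 + INR k <> 0) by (intros E; apply (np_half k); lra).
  assert (H4 : v + 1 + INR k <> 0) by (intros E; apply (np_v1 k); lra).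
  assert (H5 := hv1 v hv k).
  rewrite S_INR, mult_INR. simpl (INR 2). field. repeat split; auto; intros E; try apply H3; try apply H4; lra.
Qed.

Lemma RB1 k : / binomR ((2 * INR k + v) / 2) (v / 2) = dd v k.
Proof. unfold binomR.
  replace ((2 * INR k + v) / 2 + 1) with ((v / 2 + 1) + INR k) by field.
  replace ((2 * INR k + v) / 2 - v / 2 + 1) with (1 + INR k) by field.
  rewrite !Gamma_shift by (apply np_half || apply np_1). rewrite Gamma_1, rf_fact, dd_rf.
  assert (H1 := rf_nz _ k np_half). assert (H2 := Gamma_nz _ np_half).
  assert (INR (fact k) <> 0) by apply INR_fact_neq_0.
  field. repeat split; auto.
Qed.

Lemma RB2 k : binomR (2 * INR k + v) ((2 * INR k + v) / 2) / binomR (INR k + v) (v / 2) = cc v k.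
Proof. unfold binomR.
  replace (2 * INR k + v + 1) with ((v + 1) + INR (2 * k)) by (rewrite mult_INR; simpl; ring).
  replace ((2 * INR k + v) / 2 + 1) with ((v / 2 + 1) + INR k) by field.
  replace (2 * INR k + v - (2 * INR k + v) / 2 + 1) with ((v / 2 + 1) + INR k) by field.
  replace (INR k + v + 1) with ((v + 1) + INR k) by ring.
  replace (v / 2 + 1) with (v / 2 + 1) by ring.
  replace (INR k + v - v / 2 + 1) with ((v / 2 + 1) + INR k) by field.
  rewrite !Gamma_shift by (apply np_half || apply np_v1). rewrite cc_rf.
  assert (H1 := rf_nz _ k np_half). assert (H2 := Gamma_nz _ np_half).
  assert (H3 := rf_nz _ k np_v1). assert (H4 := Gamma_nz _ np_v1).
  assert (H5 := rf_nz _ (2 * k) np_v1).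
  field. repeat split; auto.
Qed.
End V.

Lemma even_half n : Nat.even n = true -> INR n = 2 * INR (n / 2).
Proof. intros En. destruct (Nat.Even_or_Odd n) as [[m ->]|[m ->]].
- replace (2 * m / 2)%nat with m by (rewrite Nat.mul_comm, Nat.div_mul; lia). rewrite mult_INR. auto.
- rewrite Nat.even_odd in En. discriminate. Qed.

Lemma odd_half n : Nat.even n = false -> INR n - 1 = 2 * INR ((n - 1) / 2).
Proof. intros En. destruct (Nat.Even_or_Odd n) as [[m ->]|[m ->]].
- rewrite Nat.even_even in En. discriminate.
- replace ((2 * m + 1 - 1) / 2)%nat with m.
  2:{ replace (2*m+1-1)%nat with (m * 2)%nat by lia. rewrite Nat.div_mul by lia. auto. }
  rewrite plus_INR, mult_INR. simpl. ring. Qed.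

Theorem theorem35 (n : nat) :
  (sumR (fun k => binomN n (2 * k) * 2 ^ (n - 2 * k) * binomN (2 * k) k * H2 (2 * k))
        (n / 2 + 1)
   = binomN (2 * n) n * H2 n
     - sumR (fun k => binomN (2 * k) k * 2 ^ (n - k) * ((H n - H k) / (INR n - INR k))) n)
  /\
  (sumR (fun k => (-1) ^ k * binomN n k / 2 ^ k * binomN (2 * k) k * H2 k) (n + 1)
   = - sumR (fun k => binomN (2 * k) k / 2 ^ (2 * k)
                       * ((H n - H (2 * k)) / (INR n - INR (2 * k)))) (n / 2)
     + (if Nat.even n
        then / 2 ^ n * binomN n (n / 2) * H2 n
        else - (2 / 2 ^ n) * binomN (n - 1) ((n - 1) / 2) * / INR n))
  /\
  (forall v : R, (forall m : nat, v <> - INR (S m)) ->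
    (sumR (fun k => binomN n (2 * k) * 2 ^ (n - 2 * k) * binomN (2 * k) k
                    / binomR ((2 * INR k + v) / 2) (v / 2) * H2 (2 * k))
          (n / 2 + 1)
     = binomR (2 * INR n + v) ((2 * INR n + v) / 2) / binomR (INR n + v) (v / 2) * H2 n
       - sumR (fun k => binomR (2 * INR k + v) ((2 * INR k + v) / 2) * 2 ^ (n - k)
                        / binomR (INR k + v) (v / 2)
                        * ((H n - H k) / (INR n - INR k))) n)
    /\
    (sumR (fun k => (-1) ^ k * binomN n k / 2 ^ k
                    * binomR (2 * INR k + v) ((2 * INR k + v) / 2)
                    / binomR (INR k + v) (v / 2) * H2 k) (n + 1)
     = - sumR (fun k => binomN (2 * k) k / 2 ^ (2 * k) / binomR ((2 * INR k + v) / 2) (v / 2)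
                         * ((H n - H (2 * k)) / (INR n - INR (2 * k)))) (n / 2)
       + (if Nat.even n
          then binomN n (n / 2) / 2 ^ n / binomR ((INR n + v) / 2) (v / 2) * H2 n
          else - (binomN (n - 1) ((n - 1) / 2) * (2 / 2 ^ n)
                  / binomR ((INR n - 1 + v) / 2) (v / 2) * / INR n)))).
Proof.
  split; [|split].
  - assert (K := core3 0 hv0 n). rewrite cc0 in K.
    rewrite (sumR_ext _ (fun k => binomN n (2 * k) * 2 ^ (n - 2 * k) * binomN (2 * k) k * dd 0 k * H2 (2 * k)))
      by (intros; rewrite dd0; ring).
    rewrite K. f_equal. apply sumR_ext; intros. rewrite cc0. unfold Q. ring.
  - assert (K := core4 0 hv0 n).
    rewrite (sumR_ext _ (fun k => (-1) ^ k * binomN n k / 2 ^ k * cc 0 k * H2 k))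
      by (intros; rewrite cc0; ring).
    rewrite K. f_equal.
    + f_equal. apply sumR_ext; intros. rewrite dd0. unfold Q. ring.
    + destruct (Nat.even n); rewrite dd0; unfold Rdiv; ring.
  - intros v hv. split.
    + assert (K := core3 v hv n).
      rewrite (sumR_ext _ (fun k => binomN n (2 * k) * 2 ^ (n - 2 * k) * binomN (2 * k) k * dd v k * H2 (2 * k)))
        by (intros; rewrite <- (RB1 v hv); unfold Rdiv; ring).
      rewrite K, <- (RB2 v hv n). f_equal. apply sumR_ext; intros. rewrite <- (RB2 v hv). unfold Q, Rdiv. ring.
    + assert (K := core4 v hv n).
      rewrite (sumR_ext _ (fun k => (-1) ^ k * binomN n k / 2 ^ k * cc v k * H2 k))
        by (intros; rewrite <- (RB2 v hv); unfold Rdiv; ring).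
      rewrite K. f_equal.
      * f_equal. apply sumR_ext; intros. rewrite <- (RB1 v hv). unfold Q, Rdiv. ring.
      * destruct (Nat.even n) eqn:En.
        -- rewrite (even_half n En). rewrite <- (RB1 v hv). unfold Rdiv. ring.
        -- rewrite (odd_half n En). rewrite <- (RB1 v hv). unfold Rdiv. ring.
Qed.
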